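(* Let $\mathbf a=(a_1,\dots,a_k)$ be a sequence of nonnegative integers and $1\le j\le k$. There is a bijection between $D_j(a_1,\dots,a_k)$ and $D_j^*(a_1,\dots,a_{j-1},a_j+1,a_{j+1},\dots,a_k)$.
   Context: For $\mathbf a=(a_1,\dots,a_k)$ with nonnegative integer entries summing to $n$, put $c_0=0$, $c_j=a_1+\dots+a_j$, and let the $j$-th block be $A_j=\{c_{j-1}+1,\dots,c_j\}$. Let $S_{\mathbf a}\subseteq S_n$ be the set of permutations $\pi$ of $[n]$ with $\pi_i>\pi_{i+1}$ whenever $i,i+1$ lie in the same block. A fixed point is an $i$ with $\pi_i=i$. $D_j(\mathbf a)$ is the set of permutations in $S_{\mathbf a}$ with no fixed point in $A_1\cup\dots\cup A_j$; $D^*_j(\mathbf a)$ is the set of permutations in $S_{\mathbf a}$ with no fixed point in $A_1\cup\dots\cup A_{j-1}$ but with a fixed point in $A_j$. *)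

(* Defs.v *)
From mathcomp Require Import all_boot all_fingroup.
Set Implicit Arguments. Unset Strict Implicit. Unset Printing Implicit Defensive.

(* Positions are 0-based: position i : 'I_n corresponds to i+1 in [n].
   Fixed points and descents are invariant under this shift. *)

Definition cpart (a : seq nat) (j : nat) : nat := sumn (take j a).

(* 0-based position i lies in block A_j (1-based j), i.e. c_{j-1} <= i < c_j *)
Definition in_block (a : seq nat) (j i : nat) : bool :=
  (cpart a j.-1 <= i) && (i < cpart a j) && (0 < j).

Definition S_a (a : seq nat) : {set 'S_(sumn a)} :=
  [set s : 'S_(sumn a) | [forall i : 'I_(sumn a), forall i' : 'I_(sumn a),
     ((i'  : nat) == i.+1) ==>
     [exists j : 'I_(size a).+1, in_block a j i && in_block a j i'] ==>
     (s i' < s i)]].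

Definition D_set (a : seq nat) (j : nat) : {set 'S_(sumn a)} :=
  [set s in S_a a | [forall i : 'I_(sumn a), (i < cpart a j) ==> (s i != i)]].

Definition Dstar_set (a : seq nat) (j : nat) : {set 'S_(sumn a)} :=
  [set s in S_a a | [forall i : 'I_(sumn a), (i < cpart a j.-1) ==> (s i != i)]
                    && [exists i : 'I_(sumn a), in_block a j i && (s i == i)]].

(* Main.v *)
Require Import Defs.
From mathcomp Require Import all_boot all_fingroup zify.
Set Implicit Arguments. Unset Strict Implicit. Unset Printing Implicit Defensive.

Definition inb (c : nat -> nat) (k i : nat) : bool := (c k.-1 <= i) && (i < c k) && (0 < k).

Definition Sg n (c : nat -> nat) sz : {set 'S_n} :=
  [set s : 'S_n | [forall i : 'I_n, forall i' : 'I_n,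
     ((i' : nat) == i.+1) ==> [exists k : 'I_sz.+1, inb c k i && inb c k i'] ==> (s i' < s i)]].
Definition Dg n c sz j : {set 'S_n} :=
  [set s in Sg n c sz | [forall i : 'I_n, (i < c j) ==> (s i != i)]].
Definition Dsg n c sz j : {set 'S_n} :=
  [set s in Sg n c sz | [forall i : 'I_n, (i < c j.-1) ==> (s i != i)]
                    && [exists i : 'I_n, inb c j i && (s i == i)]].

Lemma D_setE a j : D_set a j = Dg (sumn a) (cpart a) (size a) j. Proof. by []. Qed.
Lemma Dstar_setE a j : Dstar_set a j = Dsg (sumn a) (cpart a) (size a) j. Proof. by []. Qed.

Lemma cpart_mono a k k' : k <= k' -> cpart a k <= cpart a k'.
Proof. by move=> h; rewrite /cpart -(subnKC h) takeD sumn_cat leq_addr. Qed.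

Lemma cpart_le a k : cpart a k <= sumn a.
Proof. by rewrite /cpart -{2}(cat_take_drop k a) sumn_cat leq_addr. Qed.

Lemma cpart_set a j0 k : j0 < size a ->
  cpart (set_nth 0 a j0 (nth 0 a j0).+1) k = cpart a k + (j0 < k).
Proof.
rewrite /cpart; elim: a j0 k => [|h t IH] j0 k //= hj.
case: k => [|k] /=; first by case: j0 {hj}.
case: j0 hj => [|j1] hj /=; first by rewrite addSn addn1.
by rewrite IH // addnA.
Qed.

Lemma card_bij (T1 T2 : finType) : #|T1| = #|T2| -> exists f : T1 -> T2, bijective f.
Proof.
move=> e.
exists (fun x => enum_val (cast_ord e (enum_rank x))).
exists (fun y => enum_val (cast_ord (esym e) (enum_rank y))).
  by move=> x /=; rewrite enum_valK cast_ordK enum_rankK.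
by move=> y /=; rewrite enum_valK cast_ordKV enum_rankK.
Qed.


Lemma SgP n c sz (s : 'S_n) : reflect (forall (i i' : 'I_n), (i' : nat) = i.+1 ->
  forall k, k <= sz -> inb c k i -> inb c k i' -> s i' < s i) (s \in Sg n c sz).
Proof.
rewrite inE; apply: (iffP forallP) => H.
  move=> i i' ei k ksz h1 h2.
  move/forallP: (H i) => /(_ i') /implyP /(_ (introT eqP ei)) /implyP; apply.
  by apply/existsP; exists (Ordinal (ksz : k < sz.+1)); rewrite h1 h2.
move=> i; apply/forallP=> i'; apply/implyP=> /eqP ei; apply/implyP=> /existsP [k /andP[h1 h2]].
by apply: (H i i' ei k _ h1 h2); rewrite -ltnS.
Qed.

Lemma SgE n c sz (s : 'S_n) : s \in Sg n c sz -> forall (i i' : 'I_n), (i' : nat) = i.+1 ->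
  forall k, k <= sz -> inb c k i -> inb c k i' -> s i' < s i.
Proof. by move/SgP. Qed.
Arguments SgE [n c sz s] _ i i' _ k _ _ _.

Lemma Sg_trans n c sz (s : 'S_n) k : s \in Sg n c sz -> k <= sz ->
  forall i i' : 'I_n, i < i' -> inb c k i -> inb c k i' -> s i' < s i.
Proof.
move/SgP=> H ksz.
suff: forall d (i i' : 'I_n), (i' : nat) = i + d.+1 -> inb c k i -> inb c k i' -> s i' < s i.
  move=> HH i i' lt; apply: (HH (i' - i).-1); lia.
elim=> [|d IH] i i' e hi hi'; first by apply: (H i i' _ k ksz hi hi'); rewrite e addn1.
have hm : i + d.+1 < n by have := ltn_ord i'; lia.
have him : inb c k (Ordinal hm) by move: hi hi'; rewrite /inb e /=; lia.
apply: (ltn_trans (H (Ordinal hm) i' _ k ksz him hi')); first by rewrite e /=; lia.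
by apply: (IH i (Ordinal hm)).
Qed.

Lemma ltn_bump2 h x y : (bump h x < bump h y) = (x < y).
Proof. by rewrite !ltnNge leq_bump2. Qed.

Lemma perm_unlift n (s : 'S_n.+1) q : s q = q -> exists t : 'S_n, s = lift_perm q q t.
Proof.
move=> hq.
pose f := fun k : 'I_n => odflt k (unlift q (s (lift q k))).
have hf : forall k, lift q (f k) = s (lift q k).
  move=> k; rewrite /f; case: unliftP => [y ->|e] //=.
  exfalso; move: e; rewrite -{2}hq => /perm_inj /eqP.
  by rewrite eq_sym (negbTE (neq_lift q k)).
have finj : injective f.
  by move=> x y e; apply: (@lift_inj _ q); apply: (@perm_inj _ s); rewrite -!hf e.
exists (perm finj); apply/permP => x; case: (unliftP q x) => [y|] ->.
  by rewrite lift_perm_lift permE hf.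
by rewrite lift_perm_id hq.
Qed.

Section Core.
Variables (n : nat) (c c' : nat -> nat) (sz j : nat).
Hypotheses (cmono : forall k k', k <= k' -> c k <= c k') (cle : forall k, c k <= n)
  (ec' : forall k, c' k = c k + (j <= k)) (j0 : 0 < j) (jsz : j <= sz).

Ltac mf k := have := @cmono k j.-1; have := @cmono j k.-1; have := @cmono j k;
  have := @cmono k.-1 j.-1; have := @cmono k.-1 k; have := @cmono j.-1 j; have := @cmono j.-1 k.-1; have := @cmono k j.

Definition goodb (t : 'S_n) (p : nat) : bool :=
  (c j.-1 <= p <= c j)
  && [forall i : 'I_n, ((c j.-1 < p) && (i.+1 == p)) ==> (p <= t i)]
  && [forall i : 'I_n, ((p < c j) && (i == p :> nat)) ==> (t i < p)].

Lemma ins_in (t : 'S_n) (p : 'I_n.+1) : t \in Dg n c sz j -> goodb t p ->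
  lift_perm p p t \in Dsg n.+1 c' sz j.
Proof.
move=> hD /andP[/andP[/andP[hc0 hc1] /forallP F1] /forallP F2].
move: hD; rewrite inE => /andP[hS /forallP hF].
rewrite inE; apply/andP; split; [| apply/andP; split].
- apply/SgP => x x' ex k ksz hx hx'.
  case: (unliftP p x) => [y|] ex0; case: (unliftP p x') => [y'|] ex0'; subst x x'.
  + rewrite !lift_perm_lift /= ltn_bump2.
    move: ex hx hx'; rewrite /= /inb !ec' => ex hx hx'.
    have HH := SgE hS; apply: (HH y y' _ k ksz); rewrite /inb; mf k; rewrite /bump in ex hx hx' *; lia.
  + rewrite lift_perm_lift lift_perm_id /=.
    move: ex hx hx'; rewrite /= /inb !ec' => ex hx hx'.
    have : p <= t y.
      have := F1 y; rewrite /bump in ex hx hx'; move/implyP; apply.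
      apply/andP; split; [mf k; lia | apply/eqP; lia].
    by rewrite /bump; lia.
  + rewrite lift_perm_lift lift_perm_id /=.
    move: ex hx hx'; rewrite /= /inb !ec' => ex hx hx'.
    have : t y' < p.
      have := F2 y'; rewrite /bump in ex hx hx'; move/implyP; apply.
      by apply/andP; split; [mf k; lia | apply/eqP; lia].
    by rewrite /bump; lia.
  + by move: ex => /=; lia.
- apply/forallP=> x; apply/implyP=> hx.
  case: (unliftP p x) => [y|] ex0; subst x.
    rewrite lift_perm_lift (inj_eq lift_inj).
    have := hF y; move/implyP; apply.
    move: hx; rewrite /= ec' /bump; mf j; lia.
  by move: hx; rewrite ec'; lia.
- apply/existsP; exists p; rewrite lift_perm_id eqxx /inb !ec'.
  by rewrite j0 leqnn; mf j; lia.
Qed.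

Lemma good_from (s : 'S_n.+1) (t : 'S_n) (q : 'I_n.+1) : s \in Sg n.+1 c' sz ->
  s = lift_perm q q t -> c j.-1 <= q <= c j -> goodb t q.
Proof.
move=> hS es /andP[hq0 hq1].
rewrite /goodb hq0 hq1 /=; apply/andP; split; apply/forallP=> i; apply/implyP=> /andP[h1 /eqP h2].
- have E : (q : nat) = (lift q i : nat).+1 by rewrite /= /bump; lia.
  have I1 : inb c' j (lift q i) by rewrite /inb !ec' /= /bump; mf j; lia.
  have I2 : inb c' j q by rewrite /inb !ec'; mf j; lia.
  have := SgE hS (lift q i) q E j jsz I1 I2.
  by rewrite es lift_perm_lift lift_perm_id /= /bump; lia.
- have E : (lift q i : nat) = (q : nat).+1 by rewrite /= /bump; lia.
  have I1 : inb c' j (lift q i) by rewrite /inb !ec' /= /bump; mf j; lia.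
  have I2 : inb c' j q by rewrite /inb !ec'; mf j; lia.
  have := SgE hS q (lift q i) E j jsz I2 I1.
  by rewrite es lift_perm_lift lift_perm_id /= /bump; lia.
Qed.

Lemma del_in (s : 'S_n.+1) (t : 'S_n) (q : 'I_n.+1) : s \in Dsg n.+1 c' sz j ->
  s = lift_perm q q t -> c j.-1 <= q <= c j -> t \in Dg n c sz j.
Proof.
move=> hD es /andP[hq0 hq1].
move: hD; rewrite inE => /andP[hS /andP[/forallP hF _]].
rewrite inE; apply/andP; split.
- apply/SgP => y y' ey k ksz hy hy'.
  case: (boolP (y.+1 == q :> nat)) => [/eqP hyq|hyq].
  + have hk : k = j by move: hy hy'; rewrite /inb; mf k; lia.
    subst k.
    move: hy hy'; rewrite /inb => hy hy'.
    have E1 : (q : nat) = (lift q y : nat).+1 by rewrite /= /bump; lia.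
    have E2 : (lift q y' : nat) = (q : nat).+1 by rewrite /= /bump; lia.
    have Iy : inb c' j (lift q y) by rewrite /inb !ec' /= /bump; mf j; lia.
    have Iy' : inb c' j (lift q y') by rewrite /inb !ec' /= /bump; mf j; lia.
    have Iq : inb c' j q by rewrite /inb !ec'; mf j; lia.
    have := SgE hS _ _ E1 j jsz Iy Iq.
    have := SgE hS _ _ E2 j jsz Iq Iy'.
    rewrite es !lift_perm_lift lift_perm_id /= /bump; lia.
  + rewrite -(ltn_bump2 q).
    move: hy hy'; rewrite /inb => hy hy'.
    have E : (lift q y' : nat) = (lift q y : nat).+1 by rewrite /= /bump; lia.
    have I1 : inb c' k (lift q y) by rewrite /inb !ec' /= /bump; mf k; lia.
    have I2 : inb c' k (lift q y') by rewrite /inb !ec' /= /bump; mf k; lia.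
    have := SgE hS _ _ E k ksz I1 I2.
    by rewrite es !lift_perm_lift.
- apply/forallP=> y; apply/implyP=> hy.
  have hyn : c j.-1 <= y -> inb c' j (lift q y).
    by rewrite /inb !ec' /= /bump; mf j; lia.
  have hqn : inb c' j q by rewrite /inb !ec'; mf j; lia.
  case: (ltnP y (c j.-1)) => h0.
    have := hF (lift q y); rewrite es lift_perm_lift (inj_eq lift_inj) => /implyP; apply.
    by rewrite ec' /= /bump; mf j; lia.
  case: (ltnP y q) => h1.
    have := Sg_trans hS jsz (i := lift q y) (i' := q).
    rewrite es lift_perm_lift lift_perm_id /= /bump => HH.
    have : q < (q <= t y) + t y by apply: HH => //; [rewrite /bump; lia | exact: hyn].
    by apply: contraTneq => ->; lia.
  have := Sg_trans hS jsz (i := q) (i' := lift q y).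
  rewrite es lift_perm_lift lift_perm_id /= /bump => HH.
  have : (q <= t y) + t y < q by apply: HH => //; [rewrite /bump; lia | exact: hyn].
  by apply: contraTneq => ->; lia.
Qed.

Lemma good_uniq (t : 'S_n) p q : t \in Dg n c sz j -> goodb t p -> goodb t q -> p = q.
Proof.
move=> hD.
suff H : forall p q, goodb t p -> goodb t q -> p < q -> False.
  by move=> gp gq; case: (ltngtP p q) => // h; [case: (H p q) | case: (H q p)].
move=> {}p {}q /andP[/andP[/andP[hp0 hp1] _] /forallP F2] /andP[/andP[/andP[hq0 hq1] /forallP F1] _] lt.
move: hD; rewrite inE => /andP[hS _].
have hpn : p < n by have := cle j; lia.
have hqn : q.-1 < n by have := cle j; lia.
have A : t (Ordinal hpn) < p by apply: (implyP (F2 (Ordinal hpn))); rewrite /= eqxx andbT; lia.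
have B : q <= t (Ordinal hqn) by apply: (implyP (F1 (Ordinal hqn))); apply/andP; split; [lia|apply/eqP => /=; lia].
case: (ltnP p q.-1) => h.
  have I1 : inb c j (Ordinal hpn) by rewrite /inb /=; mf j; lia.
  have I2 : inb c j (Ordinal hqn) by rewrite /inb /=; mf j; lia.
  have := Sg_trans hS jsz (i := Ordinal hpn) (i' := Ordinal hqn) h I1 I2; lia.
have e : Ordinal hpn = Ordinal hqn by apply: val_inj => /=; lia.
by move: A B; rewrite e; lia.
Qed.

Lemma good_exists (t : 'S_n) : t \in Dg n c sz j -> exists2 p, p <= n & goodb t p.
Proof.
move=> hD; move: (hD); rewrite inE => /andP[hS /forallP hF].
pose Q m := (c j.-1 <= m) && ((c j <= m) || [exists i : 'I_n, (i == m :> nat) && (t i < m)]).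
have Qc : Q (c j) by rewrite /Q leqnn orTb andbT; mf j; lia.
case: (ex_minnP (ex_intro Q (c j) Qc)) => m /andP[hm1 hm2] hmin.
have hmc := hmin _ Qc.
exists m; first by have := cle j; lia.
rewrite /goodb hm1 hmc /=; apply/andP; split; apply/forallP=> i; apply/implyP=> /andP[h1 /eqP h2].
- rewrite leqNgt; apply/negP => hlt.
  have hne : t i != i by apply: (implyP (hF i)); lia.
  have : Q i.
    rewrite /Q; apply/andP; split; first by lia.
    apply/orP; right; apply/existsP; exists i; rewrite eqxx /=.
    have hne2 : (t i : nat) <> i by move=> e; move/eqP: hne; apply; apply: val_inj.
    lia.
  by move/hmin; lia.
- move: hm2; rewrite leqNgt h1 /= => /existsP [i0 /andP[/eqP e0 hi0]].
  by have -> : i = i0 by apply: val_inj; rewrite /= e0 h2.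
Qed.

Definition pp (t : 'S_n) := find (goodb t) (iota 0 n.+1).

Lemma ppP t : t \in Dg n c sz j -> pp t < n.+1 /\ goodb t (pp t).
Proof.
move=> hD; have [p hp gp] := good_exists hD.
have hh : has (goodb t) (iota 0 n.+1) by apply/hasP; exists p; rewrite // mem_iota; lia.
have hl : pp t < n.+1 by move: (hh); rewrite has_find size_iota.
split=> //; have := nth_find 0 hh; rewrite nth_iota //.
Qed.

Definition ins (t : 'S_n) : 'S_n.+1 := lift_perm (inord (pp t)) (inord (pp t)) t.

Lemma insE t (h : pp t < n.+1) : ins t = lift_perm (Ordinal h) (Ordinal h) t.
Proof. by rewrite /ins; have -> : inord (pp t) = Ordinal h by apply: val_inj; rewrite /= inordK. Qed.

Lemma core_card : #|Dg n c sz j| = #|Dsg n.+1 c' sz j|.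
Proof.
have inj : {in Dg n c sz j &, injective ins}.
  move=> t1 t2 h1 h2.
  have [l1 g1] := ppP h1; have [l2 g2] := ppP h2.
  rewrite (insE l1) (insE l2); set p := Ordinal l1; set q := Ordinal l2 => e.
  have epq : p = q.
    case: (unliftP p q) => [y ey|] //; exfalso.
    have E1 : lift_perm p p t1 q = q by rewrite e lift_perm_id.
    have E2 : lift_perm p p t1 q = lift p (t1 y) by rewrite {1}ey lift_perm_lift.
    have ee : t1 y = y by apply: (@lift_inj _ p); rewrite -E2 E1 {1}ey.
    move: h1; rewrite inE => /andP[_ /forallP hF]; move: (hF y); rewrite ee eqxx implybF -leqNgt.
    move: g1 g2 => /andP[/andP[/andP[_ a1] _] _] /andP[/andP[/andP[_ a2] _] _].
    move/(congr1 val): ey; rewrite /= /bump; lia.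
  rewrite -epq in e; apply/permP=> y; apply: (@lift_inj _ p); by rewrite -(lift_perm_lift p p t1) -(lift_perm_lift p p t2) e.
suff <- : ins @: Dg n c sz j = Dsg n.+1 c' sz j by rewrite (card_in_imset inj).
apply/setP=> s; apply/imsetP/idP.
  by case=> t ht ->; have [l g] := ppP ht; rewrite (insE l); apply: ins_in.
move=> hs; move: (hs); rewrite inE => /andP[hS /andP[_ /existsP [q /andP[hq /eqP sq]]]].
have [t et] := perm_unlift sq.
have hq' : c j.-1 <= q <= c j by move: hq; rewrite /inb !ec'; mf j; lia.
have ht := del_in hs et hq'.
have gq := good_from hS et hq'.
have [l g] := ppP ht.
exists t => //; rewrite (insE l) et; congr lift_perm; apply: val_inj => /=;
  exact: good_uniq ht gq g.
Qed.

End Core.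

Lemma core (n N : nat) (c c' : nat -> nat) (sz j : nat) : N = n.+1 ->
  (forall k k', k <= k' -> c k <= c k') -> (forall k, c k <= n) ->
  (forall k, c' k = c k + (j <= k)) -> 0 < j -> j <= sz ->
  #|Dg n c sz j| = #|Dsg N c' sz j|.
Proof. by move=> -> *; apply: core_card. Qed.

Theorem mainTheorem8 (a : seq nat) (j : nat) :
  1 <= j <= size a ->
  exists f : {s : 'S_(sumn a) | s \in D_set a j} ->
             {t : 'S_(sumn (set_nth 0 a j.-1 (nth 0 a j.-1).+1)) |
                t \in Dstar_set (set_nth 0 a j.-1 (nth 0 a j.-1).+1) j},
    bijective f.
Proof.
move=> /andP[j1 jsz].
have hj0 : j.-1 < size a by lia.
apply: card_bij; rewrite !card_sig.
rewrite (eq_card (fun x => erefl (x \in D_set a j))).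
rewrite D_setE Dstar_setE.
have -> : size (set_nth 0 a j.-1 (nth 0 a j.-1).+1) = size a.
  by rewrite size_set_nth; apply/maxn_idPr.
have ec : forall k, cpart (set_nth 0 a j.-1 (nth 0 a j.-1).+1) k = cpart a k + (j <= k).
  by move=> k; rewrite cpart_set //; congr (_ + _); case: j j1 {jsz hj0} => [|j'].
apply: (core (c := cpart a)) => //.
- have := ec (size a); rewrite /cpart take_oversize; last by rewrite size_set_nth; lia.
  by rewrite take_oversize // jsz addn1.
- exact: cpart_mono.
- exact: cpart_le.
Qed.
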